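(* Let $\Theta\subset\mathbb{R}^n$ be a nearly convex set and $F:\mathbb{R}^n\rightrightarrows\mathbb{R}^p$, $G:\mathbb{R}^n\rightrightarrows\mathbb{R}^q$ nearly convex set-valued mappings such that $\operatorname{ri}(\operatorname{dom} F)\cap\operatorname{ri}(\operatorname{dom} G)\cap\operatorname{ri}\Theta\neq\emptyset$. Then the set-valued mapping $\Phi:\mathbb{R}^n\times\mathbb{R}^q\rightrightarrows\mathbb{R}^p$ defined by $\Phi(x,y)=F(x)$ if $x\in\Theta$ and $y\in G(x)$, and $\Phi(x,y)=\emptyset$ otherwise, is nearly convex.
   Context: A set $\Omega\subset\mathbb{R}^k$ is nearly convex if there is a convex set $C$ with $C\subset\Omega\subset\overline{C}$. For an arbitrary set $\Omega$, $\operatorname{ri}\Omega=\{a\in\Omega:\exists\delta>0,\ B(a;\delta)\cap\operatorname{aff}\Omega\subset\Omega\}$. For a set-valued mapping $F$: $\operatorname{dom} F=\{x:F(x)\neq\emptyset\}$, $\operatorname{gph} F=\{(x,y):y\in F(x)\}$; $F$ is nearly convex if $\operatorname{gph} F$ is nearly convex. *)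

(* Defs.v *)
From HB Require Import structures.
From mathcomp Require Import all_boot all_order all_algebra.
From mathcomp Require Import all_classical all_reals all_analysis.
Set Implicit Arguments. Unset Strict Implicit. Unset Printing Implicit Defensive.
Import Order.TTheory GRing.Theory Num.Theory.
Import numFieldNormedType.Exports.
Local Open Scope classical_set_scope.
Local Open Scope ring_scope.

Section Defs.
Context {R : realType}.

Definition affine_set {k : nat} (A : set 'rV[R]_k) : Prop :=
  forall x y (t : R), A x -> A y -> A (t *: x + (1 - t) *: y).

Definition aff {k : nat} (O : set 'rV[R]_k) : set 'rV[R]_k :=
  \bigcap_(A in [set A | affine_set A /\ O `<=` A]) A.

Definition eball {k : nat} (a : 'rV[R]_k) (d : R) : set 'rV[R]_k :=
  [set x | \sum_(i < k) (x ord0 i - a ord0 i) ^+ 2 < d ^+ 2].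

Definition ri {k : nat} (O : set 'rV[R]_k) : set 'rV[R]_k :=
  [set a | O a /\ exists2 d : R, 0 < d & eball a d `&` aff O `<=` O].

Definition nearly_convex {k : nat} (O : set 'rV[R]_k) : Prop :=
  exists C : set 'rV[R]_k,
    convex_set (C : set (convex_lmodType 'rV[R]_k)) /\ C `<=` O /\ O `<=` closure C.

Definition sv_dom {n m : nat} (F : 'rV[R]_n -> set 'rV[R]_m) : set 'rV[R]_n :=
  [set x | F x !=set0].

Definition gph {n m : nat} (F : 'rV[R]_n -> set 'rV[R]_m) : set 'rV[R]_(n + m) :=
  [set z | exists x y, z = row_mx x y /\ F x y].

Definition nearly_convex_map {n m : nat} (F : 'rV[R]_n -> set 'rV[R]_m) : Prop :=
  nearly_convex (gph F).

Definition Phi_map {n p q : nat} (Th : set 'rV[R]_n)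
    (F : 'rV[R]_n -> set 'rV[R]_p) (G : 'rV[R]_n -> set 'rV[R]_q) :
    'rV[R]_(n + q) -> set 'rV[R]_p :=
  fun z => [set w | Th (lsubmx z) /\ G (lsubmx z) (rsubmx z) /\ F (lsubmx z) w].

End Defs.

(* Main.v *)
Set Warnings "-notation-overridden,-ambiguous-paths,-notation-incompatible-prefix".
Require Import Defs.
From HB Require Import structures.
From mathcomp Require Import all_boot all_order all_algebra.
From mathcomp Require Import all_classical all_reals all_analysis.
From mathcomp Require Import ring lra.
Import Order.TTheory GRing.Theory Num.Theory.
Import numFieldNormedType.Exports.
Local Open Scope classical_set_scope.
Local Open Scope ring_scope.

Section Aux.
Context {R : realType}.
Set Implicit Arguments. Unset Strict Implicit.
Local Notation V k := 'rV[R]_k.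

Lemma normc k (v : V k) i : `|v ord0 i| <= `|v|.
Proof.
rewrite [leRHS]/Num.Def.normr /= mx_normrE.
exact: (le_trans _ (le_bigmax _ _ (ord0, i))).
Qed.

Lemma norm_le k (v : V k) c : 0 <= c -> (forall i, `|v ord0 i| <= c) -> `|v| <= c.
Proof.
move=> c0 H; rewrite [leLHS]/Num.Def.normr /= mx_normrE.
apply: bigmax_le => // -[i j] _ /=.
by rewrite (ord1 i).
Qed.

Lemma closureP k (C : set (V k)) a :
  closure C a <-> (forall e, 0 < e -> exists c, C c /\ `|a - c| < e).
Proof.
split.
- move=> H e e0.
  have [c [Cc bc]] := H _ (nbhsx_ballx a _ e0).
  by exists c; split => //; move: bc; rewrite -ball_normE.
- move=> H B /nbhs_ballP [e e0 sB].
  have [c [Cc ac]] := H e e0.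
  by exists c; split => //; apply: sB; rewrite -ball_normE.
Qed.


Definition cvx k (C : set (V k)) := forall x y (t : R), 0 <= t -> t <= 1 ->
  C x -> C y -> C (t *: x + (1 - t) *: y).

Lemma cvxP k (C : set (V k)) :
  convex_set (C : set (convex_lmodType (V k))) <-> cvx C.
Proof.
split.
- move=> H x y t t0 t1 Cx Cy.
  have := H x y (Itv01 t0 t1) (mem_set Cx) (mem_set Cy).
  by move/set_mem.
- move=> H x y l xA yA; apply: mem_set.
  exact: (H x y l%:num (ge0 _) (le1 _) (set_mem xA) (set_mem yA)).
Qed.

Definition deep k (A C : set (V k)) a d :=
  0 < d /\ forall u, `|u - a| < d -> A u -> C u.

Lemma LS k (A C : set (V k)) b a' t d :
  affine_set A -> C `<=` A -> cvx C -> deep A C b d -> closure C a' ->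
  0 < t -> t <= 1 -> deep A C (t *: b + (1 - t) *: a') (t * d / 2).
Proof.
move=> affA CA cC [d0 Hb] /closureP cla t0 t1.
have td0 : 0 < t * d / 2 by rewrite divr_gt0 // mulr_gt0.
split => // u uz Au.
have [c [Cc ac]] := cla _ td0.
have tn0 : t != 0 by rewrite gt_eqF.
pose v := t^-1 *: (u - (1 - t) *: c).
have vE : v = t^-1 *: u + (1 - t^-1) *: c.
  by apply/rowP => j; rewrite /v !mxE; field.
have Av : A v by rewrite vE; apply: affA => //; exact: CA.
have Cv : C v.
  apply: Hb => //.
  have -> : v - b = t^-1 *: ((u - (t *: b + (1 - t) *: a')) + (1 - t) *: (a' - c)).
    by apply/rowP => j; rewrite /v !mxE; field.
  rewrite normrZ ger0_norm ?invr_ge0 ?ltW //.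
  rewrite -(ltr_pM2l t0) mulrA mulfV // mul1r.
  apply: (le_lt_trans (ler_normD _ _)).
  have -> : t * d = t * d / 2 + t * d / 2 by rewrite -splitr.
  apply: ltr_leD => //.
  rewrite normrZ ger0_norm ?subr_ge0 //.
  apply: le_trans (ltW ac).
  by rewrite ler_piMl // ?normr_ge0 // gerBl ltW.
have -> : u = t *: v + (1 - t) *: c.
  by rewrite /v scalerA mulfV // scale1r subrK.
by apply: cC => //; rewrite ?ltW // subr_ge0.
Qed.


Lemma mulmx_bound k l (K : 'M[R]_(k, l)) :
  exists c, 0 <= c /\ forall v : V k, `|v *m K| <= c * `|v|.
Proof.
exists (\sum_i \sum_j `|K i j|); split.
  by apply: sumr_ge0 => i _; apply: sumr_ge0.
have c0 : 0 <= \sum_i \sum_j `|K i j| by apply: sumr_ge0 => i _; apply: sumr_ge0.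
move=> v; apply: norm_le; first by rewrite mulr_ge0.
move=> j; rewrite mxE.
apply: (le_trans (ler_norm_sum _ _ _)).
rewrite mulrC mulr_sumr; apply: ler_sum => i _.
rewrite normrM ler_pM //.
- exact: normc.
- by rewrite (bigD1 j) //= lerDl sumr_ge0.
Qed.

Lemma lsub_norm k l (z : V (k + l)) : `|lsubmx z| <= `|z|.
Proof. by apply: norm_le => // i; rewrite mxE normc. Qed.

Lemma eball_norm k (a x : V k) d : 0 < d ->
  `|x - a| < d / (k.+1)%:R -> eball a d x.
Proof.
move=> d0 xa; rewrite /eball /=.
have r0 : 0 <= `|x - a| := normr_ge0 _.
move: r0 xa (normc (x - a)); move: `|x - a| => r r0 xa nc.
apply: (@le_lt_trans _ _ (\sum_(i < k) r ^+ 2)).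
  apply: ler_sum => i _.
  have := nc i; rewrite !mxE ler_norml => /andP[h1 h2].
  nra.
rewrite sumr_const card_ord -mulr_natr.
have k0 : 0 <= k%:R :> R by [].
have : r * (k.+1)%:R < d by rewrite -ltr_pdivlMr.
rewrite -natr1 => h.
have s0 : 0 <= r * (k%:R + 1) by rewrite mulr_ge0 // addr_ge0.
have h2 : (r * (k%:R + 1)) ^+ 2 < d ^+ 2 by rewrite ltrXn2r.
have h1 : r ^+ 2 * k%:R <= (r * (k%:R + 1)) ^+ 2 by nra.
exact: le_lt_trans h1 h2.
Qed.

Lemma submxB k r (M : 'M[R]_(r, k)) (x y : V k) :
  (x <= M)%MS -> (y <= M)%MS -> (x - y <= M)%MS.
Proof.
move=> hx hy; apply: addmx_sub => //.
by rewrite -scaleN1r; apply: scalemx_sub.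
Qed.

Lemma sum_zero (I : Type) k (s : seq I) (w : I -> R) (f : I -> V k) :
  (forall i, 0 <= w i) -> \sum_(i <- s) w i = 0 -> \sum_(i <- s) w i *: f i = 0.
Proof.
move=> w0; elim: s => [|a s IH]; first by rewrite !big_nil.
rewrite !big_cons => /eqP; rewrite paddr_eq0 ?sumr_ge0 // => /andP[/eqP -> /eqP /IH ->].
by rewrite scale0r addr0.
Qed.

Lemma cvx_sum (I : Type) k (C : set (V k)) c0 (s : seq I) (w : I -> R) (f : I -> V k) :
  cvx C -> C c0 -> (forall i, C (c0 + f i)) -> (forall i, 0 <= w i) ->
  \sum_(i <- s) w i <= 1 -> C (c0 + \sum_(i <- s) w i *: f i).
Proof.
move=> cC Cc0 Cf; elim: s w => [|a s IH] w w0; first by rewrite !big_nil addr0.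
rewrite !big_cons => hs.
have W0 : 0 <= \sum_(i <- s) w i by apply: sumr_ge0.
have [wa1|wa1] := eqVneq (w a) 1.
  have W00 : \sum_(i <- s) w i = 0.
    by apply/eqP; rewrite eq_le W0 andbT; move: hs; rewrite wa1 gerDl.
  by rewrite sum_zero // addr0 wa1 scale1r.
have walt : w a < 1.
  by rewrite lt_neqAle wa1 /=; move: hs; apply: le_trans; rewrite lerDl.
have wa' : 0 < 1 - w a by rewrite subr_gt0.
have q : C (c0 + (1 - w a)^-1 *: \sum_(i <- s) w i *: f i).
  rewrite scaler_sumr.
  under eq_bigr do rewrite scalerA.
  apply: (IH (fun i => (1 - w a)^-1 * w i)).
    by move=> i; rewrite mulr_ge0 // invr_ge0 ltW.
  rewrite -mulr_sumr ler_pdivrMl // mulr1; lra.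

have E : forall S : V k, c0 + (w a *: f a + S) =
    w a *: (c0 + f a) + (1 - w a) *: (c0 + (1 - w a)^-1 *: S).
  move=> S; apply/rowP => j; rewrite !mxE; field.
  by rewrite gt_eqF.
rewrite E.
by apply: cC => //; exact: ltW.
Qed.

Lemma hull k (C : set (V k)) c0 : cvx C -> C c0 ->
  exists (A : set (V k)) b d, [/\ affine_set A, C `<=` A,
    (forall S, affine_set S -> C `<=` S -> A `<=` S),
    (forall a, closure A a -> A a) & C b /\ deep A C b d].
Proof.
move=> cC Cc0.
pose P := fun m => `[< exists r (M : 'M[R]_(r, k)),
  (forall i, C (c0 + row i M)) /\ \rank M = m >].
have exP : exists m, P m.
  exists 0%N; apply/asboolP; exists 0%N, 0; split; first by case.
  exact: mxrank0.
have ubP : forall m, P m -> (m <= k)%N.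
  by move=> m /asboolP [r [M [_ <-]]]; exact: rank_leq_col.
case: (ex_maxnP exP ubP) => m /asboolP [r [M [CM rM]]] maxm.
have sub : forall c, C c -> (c - c0 <= M)%MS.
  move=> c Cc.
  pose M' := col_mx M (c - c0).
  have sM : (M <= M')%MS by rewrite /M' -addsmxE addsmxSl.
  have CM' : forall i, C (c0 + row i M').
    move=> i; rewrite -(splitK i); case: (fintype.split i) => j /=.
      by rewrite rowKu.
    by rewrite rowKd row_id addrC subrK.
  have rM' : (\rank M' <= m)%N.
    by apply: maxm; apply/asboolP; exists (r + 1)%N, M'.
  have eqr : \rank M = \rank M'.
    by apply/eqP; rewrite eqn_leq mxrankS // rM.
  have := (mxrank_leqif_eq sM).2; rewrite eqr eqxx => /esym /andP [_ sM'].
  apply: submx_trans sM'.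
  by rewrite /M' -addsmxE addsmxSr.
pose A := fun u : V k => (u - c0 <= M)%MS.
have [c1 [c10 hc1]] := mulmx_bound (pinvmx M).
have [c2 [c20 hc2]] := mulmx_bound (cokermx M).
pose rr := (r.+1)%:R : R.
have rr1 : 1 <= rr by rewrite /rr ler1n.
pose ir := rr^-1.
have irr : ir * rr = 1 by rewrite /ir mulVf // gt_eqF // (lt_le_trans ltr01).
pose beta := (const_mx ir : 'rV[R]_r).
pose b := c0 + beta *m M.
pose d := (rr * rr * (c1 + 1))^-1.
have d0 : 0 < d.
  by rewrite /d invr_gt0; apply: mulr_gt0; [apply: mulr_gt0|]; lra.
have hd : d * (rr * rr * (c1 + 1)) = 1.
  by rewrite /d mulVf // gt_eqF // -(invr_gt0) -/d.
have Ab : A b by rewrite /A /b addrAC subrr add0r submxMl.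
have deepb : deep A C b d.
  split => // u ub Au.
  have sub_ub : (u - b <= M)%MS.
    have -> : u - b = (u - c0) - (b - c0) by rewrite opprB addrA subrK.
    exact: submxB.
  pose lam := (u - b) *m pinvmx M.
  have hl : lam *m M = u - b := mulmxKpV sub_ub.
  have hL : `|lam| <= c1 * d.
    apply: le_trans (hc1 _) _.
    by rewrite ler_wpM2l // ltW.
  move: (normr_ge0 lam) hL (normc lam); move: `|lam| => L L0 hL nc.
  have hLQ : L * (rr * rr) * (c1 + 1) <= c1.
    have : L * (rr * rr * (c1 + 1)) <= c1 * d * (rr * rr * (c1 + 1)).
      by rewrite ler_wpM2r // mulr_ge0 // ?mulr_ge0 ?addr_ge0 // (le_trans ler01).
    have e : c1 * d * (rr * rr * (c1 + 1)) = c1.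
      by rewrite -[c1 * d * _]mulrA hd mulr1.
    by rewrite e !mulrA.
  have hLQ' : L * rr * rr <= 1 by nra.
  have hLr : L * rr <= 1 by nra.
  have -> : u = c0 + (beta + lam) *m M.
    by rewrite mulmxDl hl addrA -/b [b + _]addrC subrK.
  rewrite mulmx_sum_row; apply: cvx_sum => //.
  - move=> i; rewrite [(beta + lam) _ _]mxE [beta _ _]mxE.
    have := nc i; rewrite ler_norml => /andP [h1 _].
    have hLi : L <= ir by nra.
    lra.
  - apply: (@le_trans _ _ (\sum_(i < r) (ir + L))).
      apply: ler_sum => i _; rewrite [(beta + lam) _ _]mxE [beta _ _]mxE lerD2l.
      exact: le_trans (ler_norm _) (nc i).
    rewrite sumr_const card_ord -mulr_natr.
    have rrE : rr = r%:R + 1 by rewrite /rr -natr1.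
    nra.
exists A, b, d; split.
- move=> x y t Ax Ay; rewrite /A.
  have -> : t *: x + (1 - t) *: y - c0 = t *: (x - c0) + (1 - t) *: (y - c0).
    by apply/rowP => j; rewrite !mxE; ring.
  by apply: addmx_sub; apply: scalemx_sub.
- exact: sub.
- move=> S affS CS u /submxP [D hD].
  have -> : u = c0 + D *m M by rewrite -hD addrC subrK.
  rewrite mulmx_sum_row.
  apply: (big_ind (fun w => S (c0 + w))).
  + by rewrite addr0; apply: CS.
  + move=> x y Sx Sy.
    have Sm := affS _ _ (2^-1) Sx Sy.
    have := affS _ _ 2 Sm (CS _ Cc0).
    have -> : 2 *: (2^-1 *: (c0 + x) + (1 - 2^-1) *: (c0 + y)) + (1 - 2) *: c0
        = c0 + (x + y).
      by apply/rowP => j; rewrite !mxE; field.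
    by [].
  + move=> i _.
    have := affS _ _ (D 0 i) (CS _ (CM i)) (CS _ Cc0).
    have -> : D 0 i *: (c0 + row i M) + (1 - D 0 i) *: c0 = c0 + D 0 i *: row i M.
      by apply/rowP => j; rewrite !mxE; ring.
    by [].
- move=> a /closureP cla; rewrite /A submxE.
  set w := (a - c0) *m cokermx M.
  have H : forall e, 0 < e -> `|w| <= c2 * e.
    move=> e e0; have [u [Au ue]] := cla e e0.
    have hu : (u - c0) *m cokermx M = 0 by apply/eqP; rewrite -submxE.
    have -> : w = (a - u) *m cokermx M.
      by rewrite /w -[in LHS](subrK u a) -addrA mulmxDl hu addr0.
    apply: le_trans (hc2 _) _.
    by rewrite ler_wpM2l // ltW.
  rewrite -normr_eq0; apply/negPn/negP => wn0.
  have w0 : 0 < `|w| by rewrite lt_neqAle eq_sym wn0 normr_ge0.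
  have c21 : 0 < c2 + 1 by rewrite ltr_pwDr.
  have := H (`|w| / (c2 + 1)) (divr_gt0 w0 c21).
  rewrite mulrA ler_pdivlMr //.
  nra.
- split => //.
  apply: deepb.2 => //.
  by rewrite subrr normr0.
Qed.

Lemma extend k (A : set (V k)) x0 x1 r : affine_set A -> A x0 -> A x1 -> 0 < r ->
  exists t x2, [/\ 0 < t, t <= 1, A x2, `|x2 - x0| < r & x0 = t *: x1 + (1 - t) *: x2].
Proof.
move=> affA Ax0 Ax1 r0.
have N0 : 0 <= `|x0 - x1| := normr_ge0 _.
move: N0 (erefl `|x0 - x1|); move: {2}`|x0 - x1| => N N0 NE.
have N1 : 0 < N + 1 by lra.
pose e := r / (N + 1).
have e0 : 0 < e by rewrite divr_gt0.
have e1 : 0 < 1 + e by lra.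
exists (e / (1 + e)), ((1 + e) *: x0 + (1 - (1 + e)) *: x1); split.
- by rewrite divr_gt0.
- by rewrite ler_pdivrMr // mul1r; lra.
- exact: affA.
- have -> : (1 + e) *: x0 + (1 - (1 + e)) *: x1 - x0 = e *: (x0 - x1).
    by apply/rowP => j; rewrite !mxE; ring.
  rewrite normrZ gtr0_norm // -NE /e mulrAC ltr_pdivrMr //.
  nra.
- apply/rowP => j; rewrite !mxE; field.
  by rewrite gt_eqF.
Qed.

Lemma LS_in k (A C : set (V k)) b a' t d :
  affine_set A -> C `<=` A -> (forall x, closure A x -> A x) -> cvx C ->
  C b -> deep A C b d -> closure C a' ->
  0 < t -> t <= 1 -> C (t *: b + (1 - t) *: a') /\
    deep A C (t *: b + (1 - t) *: a') (t * d / 2).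
Proof.
move=> affA CA clA cC Cb db cla t0 t1.
have dz := LS affA CA cC db cla t0 t1.
split => //; apply: dz.2; first by rewrite subrr normr0; case: dz.
apply: affA; first exact: CA.
apply: clA; move/closureP: cla => cla; apply/closureP => e e0.
by have [c [Cc ac]] := cla e e0; exists c; split => //; apply: CA.
Qed.

Lemma closure_sub k (C A : set (V k)) x :
  C `<=` A -> closure C x -> closure A x.
Proof.
move=> CA /closureP cla; apply/closureP => e e0.
by have [c [Cc ac]] := cla e e0; exists c; split => //; apply: CA.
Qed.

Lemma closure_self k (C : set (V k)) x : C x -> closure C x.
Proof. by move=> Cx; apply/closureP => e e0; exists x; rewrite subrr normr0. Qed.

Lemma ri_deep k (C O A : set (V k)) b d0 a :
  cvx C -> C `<=` O -> O `<=` closure C ->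
  affine_set A -> C `<=` A -> (forall S, affine_set S -> C `<=` S -> A `<=` S) ->
  (forall x, closure A x -> A x) -> C b -> deep A C b d0 ->
  ri O a -> exists d, C a /\ deep A C a d.
Proof.
move=> cC CO OC affA CA minA clA Cb db [Oa [d dpos hd]].
have Aa : A a by apply: clA; apply: (closure_sub CA); apply: OC.
have Aaff : A `<=` aff O.
  move=> u Au S [affS OS]; apply: (minA S affS) => //.
  by move=> c Cc; apply: OS; apply: CO.
have r0 : 0 < d / (k.+1)%:R by rewrite divr_gt0.
have [t [x2 [t0 t1 Ax2 x2a ->]]] := extend affA Aa (CA _ Cb) r0.
have Ox2 : O x2.
  apply: hd; split; last exact: Aaff.
  exact: eball_norm.
have [Cz dz] := LS_in affA CA clA cC Cb db (OC _ Ox2) t0 t1.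
by exists (t * d0 / 2).
Qed.

Lemma lsubC k l (a b : V (k + l)) (t s : R) :
  lsubmx (t *: a + s *: b) = t *: lsubmx a + s *: lsubmx b.
Proof. by apply/rowP => j; rewrite !mxE. Qed.

Lemma rsubC k l (a b : V (k + l)) (t s : R) :
  rsubmx (t *: a + s *: b) = t *: rsubmx a + s *: rsubmx b.
Proof. by apply/rowP => j; rewrite !mxE. Qed.

Lemma lsubB k l (a b : V (k + l)) : lsubmx (a - b) = lsubmx a - lsubmx b.
Proof. by apply/rowP => j; rewrite !mxE. Qed.

Lemma gph_row k l (G : V k -> set (V l)) x y : gph G (row_mx x y) -> G x y.
Proof. by move=> [x' [y' [/eq_row_mx [-> ->] Gxy]]]. Qed.

Lemma proj_deep k l (C3 : set (V (k + l))) (G : V k -> set (V l)) x0 :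
  cvx C3 -> C3 `<=` gph G -> gph G `<=` closure C3 -> ri (sv_dom G) x0 ->
  exists (A3 : set (V (k + l))) z0 d, [/\ affine_set A3, C3 `<=` A3,
    (forall x, closure A3 x -> A3 x), C3 z0 /\ deep A3 C3 z0 d & lsubmx z0 = x0].
Proof.
move=> cC CG GC rix0.
have [[y Gy] _] := rix0.
have gz : gph G (row_mx x0 y) by exists x0, y.
have [c [Cc _]] := (closureP _ _).1 (GC _ gz) 1 ltr01.
have [A3 [b3 [d3 [affA3 CA3 minA3 clA3 [Cb3 db3]]]]] := hull cC Cc.
pose P := [set x : V k | exists y, C3 (row_mx x y)].
have cP : cvx P.
  move=> x x' t t0 t1 [yy Cy] [yy' Cy']; exists (t *: yy + (1 - t) *: yy').
  rewrite -add_row_mx -!scale_row_mx.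
  exact: cC.
have Pc : P (lsubmx c) by exists (rsubmx c); rewrite hsubmxK.
have [AP [bP [dP [affAP CAP minAP clAP [CbP dbP]]]]] := hull cP Pc.
have PO : P `<=` sv_dom G.
  by move=> x [yy /CG /gph_row Gxy]; exists yy.
have OP : sv_dom G `<=` closure P.
  move=> x [yy Gxy].
  have gz' : gph G (row_mx x yy) by exists x, yy.
  move/closureP: (GC _ gz') => clz; apply/closureP => e e0.
  have [c' [Cc' hc']] := clz e e0.
  exists (lsubmx c'); split; first by exists (rsubmx c'); rewrite hsubmxK.
  apply: le_lt_trans hc'.
  have -> : x - lsubmx c' = lsubmx (row_mx x yy - c') by rewrite lsubB row_mxKl.
  exact: lsub_norm.
have [dx [Px0 dx0]] := ri_deep cP PO OP affAP CAP minAP clAP CbP dbP rix0.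
have Px1 : P (lsubmx b3) by exists (rsubmx b3); rewrite hsubmxK.
have [t [x2 [t0 t1 Ax2 x2a x0E]]] := extend affAP (CAP _ Px0) (CAP _ Px1) dx0.1.
have [y2 Cy2] : P x2 := dx0.2 _ x2a Ax2.
have [Cz dz] := LS_in affA3 CA3 clA3 cC Cb3 db3 (closure_self Cy2) t0 t1.
exists A3, (t *: b3 + (1 - t) *: row_mx x2 y2), (t * d3 / 2); split => //.
by rewrite lsubC row_mxKl -x0E.
Qed.

End Aux.

Lemma dist_conv (R : realType) k (a b : 'rV[R]_k) (t : R) :
  a - (t *: b + (1 - t) *: a) = t *: (a - b).
Proof. by apply/rowP => j; rewrite !mxE; ring. Qed.

Theorem theorem4p1 (R : realType) (n p q : nat) (Th : set 'rV[R]_n)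
    (F : 'rV[R]_n -> set 'rV[R]_p) (G : 'rV[R]_n -> set 'rV[R]_q) :
  nearly_convex Th -> nearly_convex_map F -> nearly_convex_map G ->
  ri (sv_dom F) `&` ri (sv_dom G) `&` ri Th !=set0 ->
  nearly_convex_map (Phi_map Th F G).
Proof.
move=> [C1 [cC1 [C1T TC1]]] [C2 [cC2 [C2F FC2]]] [C3 [cC3 [C3G GC3]]].
move=> [x0 [[riF riG] riT]].
move/cvxP: cC1 => cC1; move/cvxP: cC2 => cC2; move/cvxP: cC3 => cC3.
have [Tx0 _] := riT.
have [c1 [Cc1 _]] := (closureP _ _).1 (TC1 _ Tx0) 1 ltr01.
have [A1 [b1 [d1 [affA1 CA1 minA1 clA1 [Cb1 db1]]]]] := hull cC1 Cc1.
have [dx [C1x0 dx0]] := ri_deep cC1 C1T TC1 affA1 CA1 minA1 clA1 Cb1 db1 riT.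
have [A3 [z3 [d3 [affA3 CA3 clA3 [Cz3 dz3] z3x]]]] := proj_deep cC3 C3G GC3 riG.
have [A2 [z2 [d2 [affA2 CA2 clA2 [Cz2 dz2] z2x]]]] := proj_deep cC2 C2F FC2 riF.
pose C := [set z : 'rV[R]_(n + q + p) | C1 (lsubmx (lsubmx z)) /\ C3 (lsubmx z) /\
  C2 (row_mx (lsubmx (lsubmx z)) (rsubmx z))].
exists C; split; [|split].
- apply/cvxP => x y t t0 t1 [h1 [h3 h2]] [h1' [h3' h2']]; rewrite /C /=.
  rewrite !lsubC rsubC; split; [|split].
  + exact: cC1.
  + exact: cC3.
  + rewrite -add_row_mx -!scale_row_mx; exact: cC2.
- move=> z [h1 [h3 h2]].
  exists (lsubmx z), (rsubmx z); split; first by rewrite hsubmxK.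
  have /C3G [x [y [xyE Gxy]]] := h3.
  rewrite /Phi_map /= xyE row_mxKl row_mxKr.
  rewrite xyE row_mxKl in h1 h2.
  split; first exact: C1T.
  by split => //; apply: gph_row; apply: C2F.
- move=> z [xy [w [-> [Tx [Gxy Fxw]]]]].
  have clx : closure C1 (lsubmx xy) := TC1 _ Tx.
  have clxy : closure C3 xy.
    by apply: GC3; exists (lsubmx xy), (rsubmx xy); rewrite hsubmxK.
  have clxw : closure C2 (row_mx (lsubmx xy) w).
    by apply: FC2; exists (lsubmx xy), w.
  pose z0 := row_mx z3 (rsubmx z2).
  apply/closureP => e e0.
  have N0 : 0 <= `|row_mx xy w - z0| := normr_ge0 _.
  move: N0 (erefl `|row_mx xy w - z0|); move: {2}`|row_mx xy w - z0| => N N0 NE.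
  pose t := e / (e + N).
  have eN : 0 < e + N by lra.
  have t0 : 0 < t by rewrite divr_gt0.
  have t1 : t <= 1 by rewrite ler_pdivrMr // mul1r; lra.
  exists (t *: z0 + (1 - t) *: row_mx xy w); split.
  + rewrite /C /= !lsubC rsubC /z0 !row_mxKl !row_mxKr; split; [|split].
    * rewrite z3x; exact: (LS_in affA1 CA1 clA1 cC1 C1x0 dx0 clx t0 t1).1.
    * exact: (LS_in affA3 CA3 clA3 cC3 Cz3 dz3 clxy t0 t1).1.
    * rewrite z3x -z2x -add_row_mx -!scale_row_mx hsubmxK.
      exact: (LS_in affA2 CA2 clA2 cC2 Cz2 dz2 clxw t0 t1).1.
  + rewrite dist_conv normrZ gtr0_norm // -NE /t mulrAC ltr_pdivrMr //.
    nra.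
Qed.
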